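(* Let $0<b<1$ be fixed, let $\beta=1-b$, and let $t,k$ be constants with $t>\frac{1+\log 2}{\beta}-\log\beta$ and $k>\frac{2t}{1-e^{-t}}$. If $p=p(n)$ satisfies $np\ge k\log n$, then the random graph $G=\mathcal G(n,p)$ asymptotically almost surely has $\iota_v(G)\ge b$.
   Context: $\mathcal G(n,p)$ is the Erdős–Rényi random graph on $n$ labelled vertices with each edge present independently with probability $p$. ''Asymptotically almost surely'' means with probability tending to $1$ as $n\to\infty$. $\log$ is the natural logarithm. For a graph $G$ on $n$ vertices, $N(S)$ is the set of vertices with a neighbour in $S$ and $\iota_v(G)=\min_{0<|S|\le n/2}|N(S)\setminus S|/|S|$. *)

(* Defs.v *)
From mathcomp Require Import all_boot all_order all_algebra.
From mathcomp Require Import all_classical all_reals all_analysis.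
Set Implicit Arguments. Unset Strict Implicit. Unset Printing Implicit Defensive.
Import Order.TTheory GRing.Theory Num.Theory.
Local Open Scope ring_scope.

(* A simple graph on the labelled vertex set 'I_n is its edge set: a set of
   2-element subsets of 'I_n. *)
Definition pairs (n : nat) : {set {set 'I_n}} := [set e : {set 'I_n} | #|e| == 2%N].

Definition is_graph (n : nat) (G : {set {set 'I_n}}) : bool := G \subset pairs n.

Definition nbhd (n : nat) (G : {set {set 'I_n}}) (S : {set 'I_n}) : {set 'I_n} :=
  [set v | [exists u in S, [set u; v] \in G]].

(* iota_v(G) = min over 0 < |S| <= n/2 of |N(S) \ S| / |S|, as an extended
   real (the minimum over an empty family is +oo). *)
Definition iota_v {R : realType} (n : nat) (G : {set {set 'I_n}}) : \bar R :=
  \big[Order.min/+oo%E]_(S : {set 'I_n} | (0 < #|S|)%N && (2 * #|S| <= n)%N)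
     ((#|nbhd G S :\: S|%:R / #|S|%:R)%:E).

Definition gnp_weight {R : realType} (n : nat) (p : R) (G : {set {set 'I_n}}) : R :=
  p ^+ #|G| * (1 - p) ^+ (#|pairs n| - #|G|).

Definition gnp_prob {R : realType} (n : nat) (p : R) (P : {set {set 'I_n}} -> bool) : R :=
  \sum_(G in powerset (pairs n) | P G) gnp_weight p G.

(* Main.v *)
Require Import Defs.
From mathcomp Require Import all_boot all_order all_algebra.
From mathcomp Require Import all_classical all_reals all_analysis.
From mathcomp Require Import ring lra zify.
Import Order.TTheory GRing.Theory Num.Theory numFieldNormedType.Exports.
Local Open Scope ring_scope.

Lemma sum_powerset (R : realType) (T : finType) (x y : R) (n : nat) (A : {set T}) :
  #|A| = n ->
  \sum_(G in powerset A) x ^+ #|G| * y ^+ (#|A| - #|G|) = (x + y) ^+ #|A|.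
Proof.
elim: n A => [|n IH] A hA.
  have -> : A = finset.set0 by apply/eqP; rewrite -cards_eq0 hA.
  by rewrite powerset0 big_set1 cards0 !expr0 mulr1.
have : (0 < #|A|)%N by rewrite hA.
case/card_gt0P => a aA.
have hA' : #|A :\ a| = n by move: hA; rewrite (cardsD1 a A) aA add1n => -[].
rewrite (bigID (fun G : {set T} => a \in G)) /=.
have E1 : \sum_(G in powerset A | a \notin G) x ^+ #|G| * y ^+ (#|A| - #|G|)
   = y * (x + y) ^+ n.
  rewrite -hA' -(IH _ hA') mulr_sumr.
  apply: eq_big => G.
    by rewrite !powersetE subsetD1.
  move=> /andP[]; rewrite powersetE => GA aG.
  have : (#|G| <= n)%N by rewrite -hA'; apply: subset_leq_card; rewrite subsetD1 GA.
  move=> le; rewrite hA hA' subSn // exprS; ring.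
have E2 : \sum_(G in powerset A | a \in G) x ^+ #|G| * y ^+ (#|A| - #|G|)
   = x * (x + y) ^+ n.
  rewrite -hA' -(IH _ hA') mulr_sumr.
  rewrite (reindex_onto (fun H => a |: H) (fun G => G :\ a)) /=; last first.
    by move=> G /andP[_ aG]; rewrite finset.setD1K.
  apply: eq_big => H.
    rewrite powersetE finset.setU11 andbT powersetE.
    apply/andP/idP.
      case=> sub /eqP e.
      have aH : a \notin H by rewrite -e !inE eqxx.
      rewrite subsetD1 aH andbT; exact: (fintype.subset_trans (finset.subsetUr _ _) sub).
    move=> sub; move: (sub); rewrite subsetD1 => /andP[sHA aH]; split.
      by apply/fintype.subsetP => z; rewrite !inE => /orP[/eqP->//|/(fintype.subsetP sHA)].
    by rewrite finset.setU1K.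
  move=> /andP[/andP[]]; rewrite powersetE => HA _ /eqP e.
  have aH : a \notin H by rewrite -e !inE eqxx.
  have : (#|H| <= n)%N.
    rewrite -hA'; apply: subset_leq_card; rewrite subsetD1 aH andbT.
    exact: (fintype.subset_trans (finset.subsetUr _ _) HA).
  move=> le; rewrite cardsU1 aH hA hA' add1n subSS exprS; ring.
rewrite E1 E2 hA exprS; ring.
Qed.

Lemma gnp_avoid (R : realType) (n : nat) (p : R) (F : {set {set 'I_n}}) :
  F \subset pairs n ->
  gnp_prob p (fun G : {set {set 'I_n}} => [disjoint G & F]) = (1 - p) ^+ #|F|.
Proof.
move=> sF; rewrite /gnp_prob /gnp_weight.
set A := pairs n :\: F.
have hN : #|pairs n| = (#|F| + #|A|)%N.
  rewrite /A cardsD (finset.setIidPr sF).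
  have := subset_leq_card sF; move: #|F| #|pairs n| => u v; lia.
have e1 : \sum_(G in powerset (pairs n) | [disjoint G & F]) p ^+ #|G| * (1 - p) ^+ (#|pairs n| - #|G|)
  = \sum_(G in powerset A) (1 - p) ^+ #|F| * (p ^+ #|G| * (1 - p) ^+ (#|A| - #|G|)).
  apply: eq_big => G.
    by rewrite !powersetE subsetD.
  rewrite powersetE => /andP[sG dG].
  have hg : (#|G| <= #|A|)%N.
    apply: subset_leq_card; rewrite subsetD sG dG //.
  have -> : (#|pairs n| - #|G| = #|F| + (#|A| - #|G|))%N by move: hN hg; move: #|F| #|pairs n| #|A| #|G| => u v w z; lia.
  by rewrite exprD mulrCA.
rewrite e1 -mulr_sumr (@sum_powerset _ _ _ _ _ _ (erefl _)).
by rewrite addrCA subrr addr0 expr1n mulr1.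
Qed.

Lemma gnp_total (R : realType) (n : nat) (p : R) :
  gnp_prob p (fun _ : {set {set 'I_n}} => true) = 1.
Proof.
have h := @gnp_avoid R n p _ (finset.sub0set (pairs n)).
rewrite cards0 expr0 in h; rewrite -[RHS]h /gnp_prob.
by apply: eq_bigl => G; rewrite -setI_eq0 finset.setI0 eqxx.
Qed.

Lemma gnp_compl (R : realType) (n : nat) (p : R) (P : pred {set {set 'I_n}}) :
  gnp_prob p P = 1 - gnp_prob p (fun G => ~~ P G).
Proof.
apply/eqP; rewrite -(@gnp_total R n p) eq_sym subr_eq; apply/eqP.
rewrite /gnp_prob (bigID P) /=; congr (_ + _); apply: eq_bigl => G; by rewrite andbT.
Qed.

Lemma gnp_weight_ge0 (R : realType) (n : nat) (p : R) (G : {set {set 'I_n}}) :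
  0 <= p <= 1 -> 0 <= gnp_weight p G.
Proof.
move=> /andP[p0 p1]; rewrite /gnp_weight; apply: mulr_ge0; apply: exprn_ge0 => //.
by rewrite subr_ge0.
Qed.

Lemma gnp_prob_ge0 (R : realType) (n : nat) (p : R) (P : pred {set {set 'I_n}}) :
  0 <= p <= 1 -> 0 <= gnp_prob p P.
Proof. by move=> hp; apply: sumr_ge0 => G _; apply: gnp_weight_ge0. Qed.

Lemma gnp_union (R : realType) (n : nat) (p : R) (I : finType) (Q : pred I)
   (P : pred {set {set 'I_n}}) (E : I -> pred {set {set 'I_n}}) :
  0 <= p <= 1 ->
  (forall G : {set {set 'I_n}}, G \subset pairs n -> P G -> exists i, Q i && E i G) ->
  gnp_prob p P <= \sum_(i | Q i) gnp_prob p (E i).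
Proof.
move=> hp hE; rewrite /gnp_prob.
apply: (@le_trans _ _ (\sum_(G : {set {set 'I_n}} | (G \in powerset (pairs n)) && P G)
   \sum_(i | Q i) (if E i G then gnp_weight p G else 0))).
  apply: ler_sum => G /andP[]; rewrite powersetE => sG PG.
  have [i /andP[Qi Ei]] := hE G sG PG.
  rewrite (bigD1 i) //= Ei lerDl; apply: sumr_ge0 => j _.
  by case: ifP => _ //; apply: gnp_weight_ge0.
apply: (@le_trans _ _ (\sum_(G : {set {set 'I_n}} | G \in powerset (pairs n))
   \sum_(i | Q i) (if E i G then gnp_weight p G else 0))).
  rewrite [X in _ <= X](bigID P) /= lerDl; apply: sumr_ge0 => G _.
  apply: sumr_ge0 => j _; by case: ifP => _ //; apply: gnp_weight_ge0.
rewrite exchange_big /=; apply: ler_sum => i _.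
by rewrite big_mkcondr.
Qed.


Definition Fset (n : nat) (S W : {set 'I_n}) : {set {set 'I_n}} :=
  [set [set uv.1; uv.2] | uv in finset.setX S (~: (S :|: W))].
Arguments Fset {n} S W.

Lemma Fset_inj (n : nat) (S W : {set 'I_n}) :
  {in finset.setX S (~: (S :|: W)) &, injective (fun uv : 'I_n * 'I_n => [set uv.1; uv.2])}.
Proof.
move=> [u v] [u' v']; rewrite !inE /= => /andP[uS vC] /andP[u'S v'C] e.
have vS : v \notin S by move: vC; apply: contra => hv; rewrite hv.
have v'S : v' \notin S by move: v'C; apply: contra => hv; rewrite hv.
have : u \in [set u'; v'] by rewrite -e !inE eqxx.
rewrite !inE => /orP[/eqP eu|/eqP eu]; last by move: v'S; rewrite -eu uS.
subst u'.
have : v \in [set u; v'] by rewrite -e !inE eqxx orbT.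
rewrite !inE => /orP[/eqP ev|/eqP ev]; first by move: vS; rewrite ev uS.
by rewrite ev.
Qed.

Lemma Fset_card (n : nat) (S W : {set 'I_n}) :
  #|Fset S W| = (#|S| * #|~: (S :|: W)|)%N.
Proof. by rewrite /Fset card_in_imset ?cardsX //; apply: Fset_inj. Qed.

Lemma Fset_sub (n : nat) (S W : {set 'I_n}) : Fset S W \subset pairs n.
Proof.
apply/fintype.subsetP => e /finset.imsetP [[u v]]; rewrite !inE /= => /andP[uS vC] ->.
rewrite cards2; case: (u =P v) => [euv|//]; move: vC; by rewrite -euv uS.
Qed.

Definition Qc (R : realType) (n : nat) (b : R) (SW : {set 'I_n} * {set 'I_n}) : bool :=
  [&& (0 < #|SW.1|)%N, (2 * #|SW.1| <= n)%N & (#|SW.2|%:R < b * #|SW.1|%:R)].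
Arguments Qc {R n} b SW.

Lemma bad_cover (R : realType) (n : nat) (b : R) (G : {set {set 'I_n}}) :
  ~~ (b%:E <= iota_v (R:=R) G)%E ->
  exists SW, Qc b SW && [disjoint G & Fset SW.1 SW.2].
Proof.
move=> hbad.
have : [exists S : {set 'I_n}, [&& (0 < #|S|)%N, (2 * #|S| <= n)%N &
   (((#|nbhd G S :\: S|%:R / #|S|%:R)%:E < b%:E)%E)]].
  apply: contraNT hbad => /existsPn H; rewrite /iota_v.
  apply: (big_ind (fun y => b%:E <= y)%E) => //.
  - exact: leey.
  - by move=> x y hx hy; rewrite le_min hx hy.
  move=> S /andP[h1 h2]; move: (H S); rewrite h1 h2 /= -leNgt; exact.
case/existsP => S /and3P[h1 h2 h3].
exists (S, nbhd G S :\: S); apply/andP; split.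
  rewrite /Qc /= h1 h2 /=.
  move: h3; rewrite lte_fin ltr_pdivrMr // ?ltr0n // mulrC //.
rewrite -setI_eq0; apply/eqP/finset.setP => e; rewrite !inE.
apply/negP => /andP[eG /finset.imsetP[[u v]]]; rewrite !inE /= => /andP[uS vC] ee.
move: vC; rewrite ee in eG.
have vN : v \in nbhd G S by rewrite /nbhd inE; apply/existsP; exists u; rewrite uS eG.
move: vN; rewrite /nbhd inE => ->; by case: (v \in S).
Qed.

Definition Edis (n : nat) (SW : {set 'I_n} * {set 'I_n}) (G : {set {set 'I_n}}) : bool :=
  [disjoint G & Fset SW.1 SW.2].


Lemma term_bound (R : realType) (b k N L p s w m : R) :
  0 < b -> b < 1 -> 2 < k -> 0 <= L -> 0 <= p -> k * L <= N * p ->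
  1 <= s -> 2 * s <= N -> 0 <= w -> w < b * s -> N - s - w <= m ->
  expR (- (p * (s * m))) <=
  expR ((1 - (k + 2) / 2) * L * s - L * w) +
  expR (- (k * ((k - 2) / (4 * k)) * (1 - b) / 2 * N * L)).
Proof.
move=> b0 b1 k2 L0 p0 hp s1 sN w0 wb hm.
have k0 : 0 < k by lra.
set e := (k - 2) / (4 * k).
have e0 : 0 < e by rewrite /e divr_gt0 //; lra.
have e1 : 1 - 2 * e = (k + 2) / (2 * k).
  rewrite /e; field; lra.
have ws : w <= s by nra.
case: (leP s (e * N)) => hs.
  apply: ler_wpDr; first exact: expR_ge0.
  rewrite ler_expR.
  have hm1 : (1 - 2 * e) * N <= m by nra.
  have h2 : 0 <= 1 - 2 * e by rewrite e1; apply: divr_ge0; lra.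
  have h3 : s * ((1 - 2 * e) * N) <= s * m by apply: ler_wpM2l => //; lra.
  have h4 : p * (s * ((1 - 2 * e) * N)) <= p * (s * m) by apply: ler_wpM2l.
  have h5 : s * (1 - 2 * e) * (k * L) <= s * (1 - 2 * e) * (N * p).
    apply: ler_wpM2l => //; apply: mulr_ge0 => //; lra.
  have h6 : (1 - 2 * e) * k = (k + 2) / 2 by rewrite e1; field; lra.
  have h7 : L * w <= L * s by apply: ler_wpM2l.
  have h8 : p * (s * ((1 - 2 * e) * N)) = s * (1 - 2 * e) * (N * p) by ring.
  have h9 : s * (1 - 2 * e) * (k * L) = (k + 2) / 2 * L * s.
    by rewrite -h6; ring.
  lra.
apply: ler_wpDl; first exact: expR_ge0.
rewrite ler_expR.
have N0 : 0 <= N by lra.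
have hm1 : (1 - b) * N / 2 <= m by nra.
have hm0 : 0 <= (1 - b) * N / 2 by apply: divr_ge0 => //; apply: mulr_ge0; lra.
have h3 : (e * N) * ((1 - b) * N / 2) <= s * m.
  apply: ler_pM => //; [apply: mulr_ge0; lra | lra].
have h4 : p * ((e * N) * ((1 - b) * N / 2)) <= p * (s * m) by apply: ler_wpM2l.
have h5 : (k * L) * (e * (1 - b) * N / 2) <= (N * p) * (e * (1 - b) * N / 2).
  apply: ler_wpM2r => //; apply: divr_ge0 => //; apply: mulr_ge0 => //; apply: mulr_ge0; lra.
have h8 : p * ((e * N) * ((1 - b) * N / 2)) = (N * p) * (e * (1 - b) * N / 2) by ring.
have h9 : (k * L) * (e * (1 - b) * N / 2) = k * e * (1 - b) / 2 * N * L by ring.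
lra.
Qed.


Lemma sum_sets (R : realType) (n : nat) (x : R) :
  \sum_(S : {set 'I_n}) x ^+ #|S| = (1 + x) ^+ n.
Proof.
have := @sum_powerset R 'I_n x 1 _ [set: 'I_n] (erefl _).
rewrite powersetT cardsT card_ord addrC => <-.
apply: eq_big => S; first by rewrite finset.in_setT.
by rewrite expr1n mulr1.
Qed.

Lemma sum_sets_ne (R : realType) (n : nat) (x : R) :
  \sum_(S : {set 'I_n}) (if S == finset.set0 then 0 else x ^+ #|S|) = (1 + x) ^+ n - 1.
Proof.
rewrite -(@sum_sets R n x) (bigD1 finset.set0) //= eqxx add0r.
rewrite [X in _ = X - _](bigD1 finset.set0) //= cards0 expr0 addrC addrK.
by apply: eq_bigr => S /negbTE ->.
Qed.

Lemma sum_le_all (R : realType) (I : finType) (P : pred I) (f : I -> R) :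
  (forall i, 0 <= f i) -> \sum_(i | P i) f i <= \sum_i f i.
Proof.
move=> h; rewrite [X in _ <= X](bigID P) /= lerDl; exact: sumr_ge0.
Qed.

Lemma pow_le_expR (R : realType) (x : R) (n : nat) :
  0 <= x -> (1 + x) ^+ n <= expR (n%:R * x).
Proof.
move=> x0; rewrite expRM_natl; apply: lerXn2r.
- by rewrite nnegrE; lra.
- by rewrite nnegrE expR_ge0.
- exact: expR_ge1Dx.
Qed.

Lemma bound_sum (R : realType) (b k p : R) (n : nat) :
  0 < b -> b < 1 -> 2 < k -> 0 <= p <= 1 -> (1 <= n)%N -> k * ln (n%:R : R) <= n%:R * p ->
  \sum_(SW : {set 'I_n} * {set 'I_n} | Qc b SW) (1 - p) ^+ (#|SW.1| * #|~: (SW.1 :|: SW.2)|) <=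
  ((1 + expR ((1 - (k + 2) / 2) * ln (n%:R : R))) ^+ n - 1) * (1 + expR (- ln (n%:R : R))) ^+ n
  + (2 ^ n * 2 ^ n)%N%:R * expR (- (k * ((k - 2) / (4 * k)) * (1 - b) / 2 * n%:R * ln (n%:R : R))).
Proof.
move=> b0 b1 k2 /andP[p0 p1] n1 hp.
set L := ln (n%:R : R).
set x := expR ((1 - (k + 2) / 2) * L).
set y := expR (- L).
set T2 := expR (- (k * ((k - 2) / (4 * k)) * (1 - b) / 2 * n%:R * L)).
have L0 : 0 <= L by apply: ln_ge0; rewrite ler1n.
apply: (@le_trans _ _ (\sum_(SW : {set 'I_n} * {set 'I_n} | Qc b SW)
   ((if SW.1 == finset.set0 then 0 else x ^+ #|SW.1| * y ^+ #|SW.2|) + T2))).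
  apply: ler_sum => -[S W] /and3P[/= h1 h2 h3].
  have S0 : S != finset.set0 by rewrite -cards_eq0 -lt0n.
  rewrite (negbTE S0).
  apply: (@le_trans _ _ (expR (- (p * (#|S|%:R * #|~: (S :|: W)|%:R))))).
    rewrite -mulNr -natrM expRM_natr; apply: lerXn2r.
    - by rewrite nnegrE subr_ge0.
    - by rewrite nnegrE expR_ge0.
    - by have := expR_ge1Dx (- p); rewrite -[1 - p]/(1 + - p).
  have -> : x ^+ #|S| * y ^+ #|W| = expR ((1 - (k + 2) / 2) * L * #|S|%:R - L * #|W|%:R).
    by rewrite expRD expRM_natr -[- (L * _)]mulNr expRM_natr.
  apply: term_bound => //.
  - by rewrite ler1n.
  - by rewrite -natrM ler_nat.
  - have hc : (n <= #|S| + #|W| + #|~: (S :|: W)|)%N.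
      have := cardsC (S :|: W); rewrite card_ord => hC.
      apply: (@leq_trans (#|S :|: W| + #|~: (S :|: W)|)); first by rewrite hC.
      rewrite leq_add2r cardsU; exact: leq_subr.
    have : (n%:R : R) <= #|S|%:R + #|W|%:R + #|~: (S :|: W)|%:R.
      by rewrite -!natrD ler_nat.
    lra.
apply: (@le_trans _ _ (\sum_(SW : {set 'I_n} * {set 'I_n})
   ((if SW.1 == finset.set0 then 0 else x ^+ #|SW.1| * y ^+ #|SW.2|) + T2))).
  apply: sum_le_all => -[S W] /=; apply: addr_ge0; last exact: expR_ge0.
  case: ifP => // _; apply: mulr_ge0; apply: exprn_ge0; exact: expR_ge0.
rewrite big_split /=; apply: lerD.
  rewrite -(pair_big predT predT (fun S W : {set 'I_n} =>
     (if S == finset.set0 then 0 else x ^+ #|S| * y ^+ #|W|))) /=.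
  rewrite -sum_sets_ne -sum_sets mulr_suml; apply: ler_sum => S _.
  rewrite mulr_sumr; apply: ler_sum => W _.
  by case: ifP => _; rewrite ?mul0r.
rewrite sumr_const card_prod -mulr_natl.
have -> : #|{set 'I_n}| = (2 ^ n)%N.
  by rewrite -cardsT -powersetT card_powerset cardsT card_ord.
by rewrite mulr1 mulr_natl.
Qed.


Lemma expR_neg_le (R : realType) (u : R) : 0 <= u -> expR (- u) <= 1 / (1 + u).
Proof.
move=> u0; rewrite ler_pdivlMr; last lra.
have h := expR_ge1Dx u.
have e : expR (- u) * expR u = 1 by rewrite -expRD addNr expR0.
have := expR_gt0 (- u); nra.
Qed.

Lemma expR_small (R : realType) (z : R) : 0 <= z -> z <= 1 / 2 -> expR z - 1 <= 2 * z.
Proof.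
move=> z0 z1.
have h := expR_ge1Dx (- z).
have e : expR (- z) * expR z = 1 by rewrite -expRD addNr expR0.
have := expR_gt0 z; have := expR_gt0 (- z); nra.
Qed.

Lemma analytic (R : realType) (b k eps : R) :
  0 < b -> b < 1 -> 2 < k -> 0 < eps ->
  exists M : R, 1 <= M /\ forall n : nat, M <= n%:R ->
  ((1 + expR ((1 - (k + 2) / 2) * ln (n%:R : R))) ^+ n - 1) * (1 + expR (- ln (n%:R : R))) ^+ n
  + (2 ^ n * 2 ^ n)%N%:R * expR (- (k * ((k - 2) / (4 * k)) * (1 - b) / 2 * n%:R * ln (n%:R : R)))
  <= eps.
Proof.
move=> b0 b1 k2 eps0.
set c := k * ((k - 2) / (4 * k)) * (1 - b) / 2.
have c0 : 0 < c.
  rewrite /c; apply: divr_gt0 => //; apply: mulr_gt0; last lra.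
  apply: mulr_gt0; first lra; apply: divr_gt0; lra.
set e1 := expR (1 : R).
have e10 : 0 < e1 := expR_gt0 _.
have ln20 : 0 <= ln (2 : R) by apply: ln_ge0; lra.
set L0 := 2 / (k - 2) * (1 + 4 * e1 / eps) + (2 * ln 2 + 1) / c.
have hA : 0 <= 2 / (k - 2) * (1 + 4 * e1 / eps).
  apply: mulr_ge0; first (apply: divr_ge0; lra).
  apply: addr_ge0 => //; apply: divr_ge0 => //; lra.
have hB : 0 <= (2 * ln 2 + 1) / c by apply: divr_ge0; lra.
exists (expR L0 + 2 / eps + 1); split.
  have := expR_gt0 L0; have : 0 <= 2 / eps by apply: divr_ge0; lra.
  lra.
move=> n hn.
set N := n%:R : R.
have e2 : 0 <= 2 / eps by apply: divr_ge0; lra.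
have hE := expR_gt0 L0.
have N1 : 1 <= N by rewrite /N; lra.
have N0 : 0 < N by lra.
have hL : L0 <= ln N.
  rewrite -[X in X <= _](expRK L0) ler_ln ?posrE //; lra.
set L := ln N.
have NL : expR L = N by rewrite /L lnK // posrE.
set x := expR ((1 - (k + 2) / 2) * L).
set y := expR (- L).
set z := expR (- ((k - 2) / 2 * L)).
have Nx : N * x = z.
  have ex : L + (1 - (k + 2) / 2) * L = - ((k - 2) / 2 * L) by field.
  by rewrite -NL /x /z -expRD ex.
have Ny : N * y = 1 by rewrite -NL /y -expRD addrN expR0.
have x0 : 0 <= x := ltW (expR_gt0 _).
have y0 : 0 <= y := ltW (expR_gt0 _).
have hx : (1 + x) ^+ n <= expR z by rewrite -Nx; exact: (@pow_le_expR R x n x0).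
have hy : (1 + y) ^+ n <= e1.
  have -> : e1 = expR (N * y) by rewrite Ny.
  exact: (@pow_le_expR R y n y0).
have hx1 : 1 <= (1 + x) ^+ n by apply: exprn_ege1; lra.
have hy0 : 0 <= (1 + y) ^+ n by apply: exprn_ge0; lra.
have u1 : 1 <= (k - 2) / 2 * L.
  have : 2 / (k - 2) * 1 <= L.
    apply: le_trans hL; rewrite /L0.
    have : 2 / (k - 2) * 1 <= 2 / (k - 2) * (1 + 4 * e1 / eps).
      apply: ler_wpM2l; first (apply: divr_ge0; lra).
      have : 0 <= 4 * e1 / eps by apply: divr_ge0; lra.
      lra.
    lra.
  rewrite mulr1 ler_pdivrMr; last lra.
  move=> h; have -> : (k - 2) / 2 * L = L * (k - 2) / 2 by ring.
  rewrite ler_pdivlMr; lra.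
have u2 : 4 * e1 / eps <= (k - 2) / 2 * L.
  have : 2 / (k - 2) * (4 * e1 / eps) <= L.
    apply: le_trans hL; rewrite /L0.
    have : 0 <= 2 / (k - 2) by apply: divr_ge0; lra.
    nra.
  move=> h.
  have hk : (k - 2) / 2 * (2 / (k - 2)) = 1 by field; lra.
  have hk0 : 0 <= (k - 2) / 2 by apply: divr_ge0; lra.
  have := ler_wpM2l hk0 h; rewrite mulrA hk mul1r //.
have z0 : 0 <= z := ltW (expR_gt0 _).
have zb : z <= 1 / (1 + (k - 2) / 2 * L) by apply: expR_neg_le; lra.
have zb2 : z <= 1 / 2.
  apply: (le_trans zb); rewrite ler_pdivrMr; last lra.
  rewrite mulrC mulrA mulr1 ler_pdivlMr; lra.
have zb3 : z * (4 * e1) <= eps.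
  have : z * (1 + (k - 2) / 2 * L) <= 1 by rewrite -ler_pdivlMr //; lra.
  have : 4 * e1 <= (k - 2) / 2 * L * eps by rewrite -ler_pdivrMr.
  nra.
have P1 : ((1 + x) ^+ n - 1) * (1 + y) ^+ n <= eps / 2.
  have hz := @expR_small R z z0 zb2.
  apply: (@le_trans _ _ ((expR z - 1) * e1)).
    apply: ler_pM; lra.
  nra.
have P2 : (2 ^ n * 2 ^ n)%N%:R * expR (- (c * N * L)) <= eps / 2.
  have h2 : (2 ^ n * 2 ^ n)%N%:R = expR (N * (2 * ln (2 : R))).
    rewrite natrM natrX /N.
    have -> : n%:R * (2 * ln (2 : R)) = ln 2 * n%:R + ln 2 * n%:R by ring.
    by rewrite expRD expRM_natr lnK // posrE.
  rewrite h2 -expRD.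
  have hc : 2 * ln 2 + 1 <= c * L.
    have : (2 * ln 2 + 1) / c <= L by move: hL; rewrite /L0 /L; lra.
    rewrite ler_pdivrMr //; lra.
  apply: (@le_trans _ _ (expR (- N))).
    rewrite ler_expR; nra.
  apply: (le_trans (@expR_neg_le R N (ltW N0))).
  rewrite ler_pdivrMr; last lra.
  have : 2 / eps <= N by lra.
  rewrite ler_pdivrMr // => h.
  nra.
lra.
Qed.


Local Open Scope classical_set_scope.
Local Open Scope ring_scope.

Theorem mainTheorem4 (R : realType) (b beta t k : R) (p : nat -> R) :
  0 < b -> b < 1 -> beta = 1 - b ->
  t > (1 + ln 2) / beta - ln beta ->
  k > 2 * t / (1 - expR (- t)) ->
  (forall n, 0 <= p n <= 1) ->
  (\forall n \near \oo, (n%:R * p n >= k * ln n%:R)) ->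
  (fun n => gnp_prob (p n) (fun G : {set {set 'I_n}} => (b%:E <= iota_v G)%E))
    @ \oo --> (1 : R).
Proof.
move=> b0 b1 hbeta ht hk hp hnear.
have k2 : 2 < k.
  have bt0 : 0 < beta by rewrite hbeta; lra.
  have bt1 : beta <= 1 by rewrite hbeta; lra.
  have l1 : ln beta <= 0 := ln_le0 bt1.
  have l2 : 0 <= ln (2:R) by apply: ln_ge0; lra.
  have t0 : 0 < t.
    have : 0 < (1 + ln 2) / beta by apply: divr_gt0 => //; lra.
    lra.
  have d0 : 0 < 1 - expR (- t) by rewrite subr_gt0 expR_lt1; lra.
  have d1 : 1 - expR (- t) <= t by have := expR_ge1Dx (- t); lra.
  have : 2 <= 2 * t / (1 - expR (- t)) by rewrite ler_pdivlMr //; lra.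
  lra.
apply/cvgrPdist_le => eps eps0.
have [M [M1 hM]] := @analytic R b k eps b0 b1 k2 eps0.
apply: filterS2 hnear (nbhs_infty_ger M) => n hkn hMn /=.
have n1 : (1 <= n)%N by rewrite -(ler_nat R); lra.
rewrite gnp_compl.
set bad := gnp_prob _ _.
have -> : 1 - (1 - bad) = bad by ring.
rewrite ger0_norm; last exact: gnp_prob_ge0.
apply: (le_trans _ (hM n hMn)).
apply: (le_trans _ (@bound_sum R b k (p n) n b0 b1 k2 (hp n) n1 hkn)).
apply: (le_trans (@gnp_union R n (p n) _ (Qc b) _
   (@Edis n) (hp n) _)).
  move=> G _ hG; exact: bad_cover hG.
apply: ler_sum => SW _.
by rewrite /Edis gnp_avoid ?Fset_sub // Fset_card.
Qed.
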